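(* Let $\mathcal{C}$ be a Grothendieck site with enough points, let $G$ be a presheaf of groups on $\mathcal{C}$ with an involution $\theta\colon G\to G$, and let $B\subset G$ be a subgroup presheaf with $\theta(B)=B$. Let $B\times B$ act on $G$ by $(b_1,b_2)\cdot g=b_1gb_2^{-1}$, and let $\Gamma=\mathbb{Z}/2\mathbb{Z}$ act on the presheaf of groupoids $E_{B\times B}G$ by $\bar g=\theta(g^{-1})$ on objects and $\overline{(b_1,b_2)}=(\theta(b_2),\theta(b_1))$ on morphisms. Let $Z^1(\theta;G)$ be the presheaf of sets $Z^1(\theta;G)(U)=\{g\in G(U)\mid g\theta(g)=1\}$, with $B$ acting by twisted conjugation $b\cdot g=\theta(b)gb^{-1}$. Then there is a canonical acyclic sectionwise fibration \[(E_{B\times B}G)^{h\Gamma}\xrightarrow{\ \sim\ } E_BZ^1(\theta;G).\]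
   Context: A groupoid is a small category with all morphisms invertible. For a group $H$ acting on a set $S$, $\mathbb{E}_HS$ is the groupoid with object set $S$ and morphism set $H\times S$, where $(h,s)$ is an arrow $s\to h\cdot s$, composition given by multiplication in $H$. For a presheaf of groups $H$ acting on a presheaf of sets $S$, $E_HS$ is the presheaf of groupoids $U\mapsto\mathbb{E}_{H(U)}S(U)$. A map of groupoids is a weak equivalence if it is an equivalence of categories, and a fibration if for every object $x$ and isomorphism $\alpha\colon f(x)\to y$ there is an isomorphism $\beta\colon x\to x_1$ with $f(\beta)=\alpha$. A morphism of presheaves of groupoids is an acyclic sectionwise fibration if on each section $U$ it is both a fibration and a weak equivalence. For a groupoid $X$ with $\Gamma$-action (nontrivial element $x\mapsto\bar x$, acting on objects and morphisms compatibly with structure maps), $X^{h\Gamma}$ has objects $(x,\phi)$ with $\phi\in\mathrm{Hom}(x,\bar x)$, $\bar\phi=\phi^{-1}$, and arrows $(x,\phi)\to(x_1,\phi_1)$ the $\alpha\colon x\to x_1$ with $\phi_1\alpha=\bar\alpha\phi$; for presheaves, $X^{h\Gamma}(U)=X(U)^{h\Gamma}$. *)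

(* Defs.v *)
Record Cat := {
  Ob : Type;
  Hom : Ob -> Ob -> Type;
  cid : forall U, Hom U U;
  ccomp : forall U V W, Hom V W -> Hom U V -> Hom U W;   (* ccomp g f = g o f *)
  ccomp_id_l : forall U V (f : Hom U V), ccomp _ _ _ (cid V) f = f;
  ccomp_id_r : forall U V (f : Hom U V), ccomp _ _ _ f (cid U) = f;
  ccomp_assoc : forall U V W X (f : Hom U V) (g : Hom V W) (h : Hom W X),
      ccomp _ _ _ h (ccomp _ _ _ g f) = ccomp _ _ _ (ccomp _ _ _ h g) f }.
Arguments cid {_} U.
Arguments ccomp {_ U V W} _ _.

Record Group := {
  gcar :> Type;
  gmul : gcar -> gcar -> gcar;
  gone : gcar;
  ginv : gcar -> gcar;
  gmulA : forall x y z, gmul x (gmul y z) = gmul (gmul x y) z;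
  gmul1l : forall x, gmul gone x = x;
  gmul1r : forall x, gmul x gone = x;
  gmulVl : forall x, gmul (ginv x) x = gone;
  gmulVr : forall x, gmul x (ginv x) = gone }.
Arguments gmul {_} _ _.
Arguments gone {_}.
Arguments ginv {_} _.

Record PshGroup (C : Cat) := {
  pg : Ob C -> Group;
  pres : forall U V, Hom C V U -> pg U -> pg V;
  pres_mul : forall U V (f : Hom C V U) x y,
      pres U V f (gmul x y) = gmul (pres U V f x) (pres U V f y);
  pres_id : forall U x, pres U U (cid U) x = x;
  pres_comp : forall U V W (f : Hom C V U) (g : Hom C W V) x,
      pres U W (ccomp f g) x = pres V W g (pres U V f x) }.
Arguments pg {_} _ _.
Arguments pres {_} _ {U V} _ _.

Definition is_involution {C : Cat} (G : PshGroup C)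
    (theta : forall U, pg G U -> pg G U) : Prop :=
  (forall U x y, theta U (gmul x y) = gmul (theta U x) (theta U y)) /\
  (forall U V (f : Hom C V U) x, pres G f (theta U x) = theta V (pres G f x)) /\
  (forall U x, theta U (theta U x) = x).

Definition is_subgroup_presheaf {C : Cat} (G : PshGroup C)
    (B : forall U, pg G U -> Prop) : Prop :=
  (forall U, B U gone) /\
  (forall U x y, B U x -> B U y -> B U (gmul x y)) /\
  (forall U x, B U x -> B U (ginv x)) /\
  (forall U V (f : Hom C V U) x, B U x -> B V (pres G f x)).

(* A groupoid is presented by raw types of objects and arrows together with
   predicates singling out the actual objects/arrows (this avoids dependent
   hom-types); gcomp g f = g o f is meaningful when tgt f = src g. *)
Record Grpd := {
  ob : Type;
  isob : ob -> Prop;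
  mor : Type;
  ismor : mor -> Prop;
  src : mor -> ob;
  tgt : mor -> ob;
  idm : ob -> mor;
  gcomp : mor -> mor -> mor;
  minv : mor -> mor }.
Arguments isob {_} _.
Arguments ismor {_} _.
Arguments src {_} _.
Arguments tgt {_} _.
Arguments idm {_} _.
Arguments gcomp {_} _ _.
Arguments minv {_} _.

Record Functor (X Y : Grpd) := {
  fo : ob X -> ob Y;
  fm : mor X -> mor Y }.
Arguments fo {_ _} _ _.
Arguments fm {_ _} _ _.

Definition is_functor {X Y : Grpd} (F : Functor X Y) : Prop :=
  (forall x, isob x -> isob (fo F x)) /\
  (forall a, ismor a -> ismor (fm F a)) /\
  (forall a, ismor a -> src (fm F a) = fo F (src a) /\ tgt (fm F a) = fo F (tgt a)) /\
  (forall x, isob x -> fm F (idm x) = idm (fo F x)) /\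
  (forall a b, ismor a -> ismor b -> tgt a = src b ->
     fm F (gcomp b a) = gcomp (fm F b) (fm F a)).

Definition is_fibration {X Y : Grpd} (F : Functor X Y) : Prop :=
  forall (x : ob X) (a : mor Y), isob x -> ismor a -> src a = fo F x ->
    exists b : mor X, ismor b /\ src b = x /\ fm F b = a.

(* weak equivalence: equivalence of categories (quasi-inverse functor together
   with natural isomorphisms; in a groupoid every natural transformation is a
   natural isomorphism) *)
Definition is_weak_equivalence {X Y : Grpd} (F : Functor X Y) : Prop :=
  exists H : Functor Y X, is_functor H /\
  (exists eta : ob X -> mor X,
     (forall x, isob x -> ismor (eta x) /\ src (eta x) = x /\
                          tgt (eta x) = fo H (fo F x)) /\
     (forall a, ismor a ->
        gcomp (eta (tgt a)) a = gcomp (fm H (fm F a)) (eta (src a)))) /\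
  (exists eps : ob Y -> mor Y,
     (forall y, isob y -> ismor (eps y) /\ src (eps y) = fo F (fo H y) /\
                          tgt (eps y) = y) /\
     (forall b, ismor b ->
        gcomp (eps (tgt b)) (fm F (fm H b)) = gcomp b (eps (src b)))).

Record PshGrpd (C : Cat) := {
  pX : Ob C -> Grpd;
  prob : forall U V, Hom C V U -> ob (pX U) -> ob (pX V);
  prmor : forall U V, Hom C V U -> mor (pX U) -> mor (pX V) }.
Arguments pX {_} _ _.
Arguments prob {_} _ {U V} _ _.
Arguments prmor {_} _ {U V} _ _.

Definition is_psh_morphism {C : Cat} (X Y : PshGrpd C)
    (F : forall U, Functor (pX X U) (pX Y U)) : Prop :=
  (forall U, is_functor (F U)) /\
  (forall U V (f : Hom C V U) x, isob x ->
     fo (F V) (prob X f x) = prob Y f (fo (F U) x)) /\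
  (forall U V (f : Hom C V U) a, ismor a ->
     fm (F V) (prmor X f a) = prmor Y f (fm (F U) a)).

Definition is_acyclic_sectionwise_fibration {C : Cat} (X Y : PshGrpd C)
    (F : forall U, Functor (pX X U) (pX Y U)) : Prop :=
  is_psh_morphism X Y F /\
  (forall U, is_fibration (F U) /\ is_weak_equivalence (F U)).

(* H : group given as a subset memH of a group type (with its operations),
   S : set given as a subset memS, act : action.
   Objects s in S; arrows (h,s) : s -> h.s; (h',h.s) o (h,s) = (h'h, s). *)
Definition actGrpd (H : Type) (memH : H -> Prop) (mulH : H -> H -> H)
    (oneH : H) (invH : H -> H) (S : Type) (memS : S -> Prop)
    (act : H -> S -> S) : Grpd := {|
  ob := S;
  isob := memS;
  mor := (H * S)%type;
  ismor := fun m => memH (fst m) /\ memS (snd m);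
  src := fun m => snd m;
  tgt := fun m => act (fst m) (snd m);
  idm := fun s => (oneH, s);
  gcomp := fun g f => (mulH (fst g) (fst f), snd f);
  minv := fun f => (invH (fst f), act (fst f) (snd f)) |}.

(* bo, bm : the action of the nontrivial element of Gamma = Z/2 *)
Definition hfix (X : Grpd) (bo : ob X -> ob X) (bm : mor X -> mor X) : Grpd := {|
  ob := (ob X * mor X)%type;
  isob := fun p => isob (fst p) /\ ismor (snd p) /\ src (snd p) = fst p /\
                   tgt (snd p) = bo (fst p) /\ bm (snd p) = minv (snd p);
  mor := ((ob X * mor X) * (ob X * mor X) * mor X)%type;
  ismor := fun t =>
     let p := fst (fst t) in let p1 := snd (fst t) in let a := snd t in
     (isob (fst p) /\ ismor (snd p) /\ src (snd p) = fst p /\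
        tgt (snd p) = bo (fst p) /\ bm (snd p) = minv (snd p)) /\
     (isob (fst p1) /\ ismor (snd p1) /\ src (snd p1) = fst p1 /\
        tgt (snd p1) = bo (fst p1) /\ bm (snd p1) = minv (snd p1)) /\
     ismor a /\ src a = fst p /\ tgt a = fst p1 /\
     gcomp (snd p1) a = gcomp (bm a) (snd p);
  src := fun t => fst (fst t);
  tgt := fun t => snd (fst t);
  idm := fun p => (p, p, idm (fst p));
  gcomp := fun t2 t1 => (fst (fst t1), snd (fst t2), gcomp (snd t2) (snd t1));
  minv := fun t => (snd (fst t), fst (fst t), minv (snd t)) |}.

Definition hfixPsh {C : Cat} (X : PshGrpd C)
    (bo : forall U, ob (pX X U) -> ob (pX X U))
    (bm : forall U, mor (pX X U) -> mor (pX X U)) : PshGrpd C := {|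
  pX := fun U => hfix (pX X U) (bo U) (bm U);
  prob := fun U V f p => (prob X f (fst p), prmor X f (snd p));
  prmor := fun U V f t =>
     ((prob X f (fst (fst (fst t))), prmor X f (snd (fst (fst t)))),
      (prob X f (fst (snd (fst t))), prmor X f (snd (snd (fst t)))),
      prmor X f (snd t)) |}.

Section Specific.
Context {C : Cat} (G : PshGroup C) (theta : forall U, pg G U -> pg G U)
        (B : forall U, pg G U -> Prop).

Definition EBBG : PshGrpd C := {|
  pX := fun U => actGrpd (pg G U * pg G U)
         (fun h => B U (fst h) /\ B U (snd h))
         (fun h k => (gmul (fst h) (fst k), gmul (snd h) (snd k)))
         (gone, gone)
         (fun h => (ginv (fst h), ginv (snd h)))
         (pg G U) (fun _ => True)
         (fun h g => gmul (gmul (fst h) g) (ginv (snd h)));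
  prob := fun U V f g => pres G f g;
  prmor := fun U V f m =>
     ((pres G f (fst (fst m)), pres G f (snd (fst m))), pres G f (snd m)) |}.

Definition barOb (U : Ob C) (g : ob (pX EBBG U)) : ob (pX EBBG U) :=
  theta U (ginv (g : pg G U)).
Definition barMor (U : Ob C) (m : mor (pX EBBG U)) : mor (pX EBBG U) :=
  ((theta U (snd (fst m)), theta U (fst (fst m))), barOb U (snd m)).

Definition EBZ : PshGrpd C := {|
  pX := fun U => actGrpd (pg G U) (B U) gmul gone ginv
         (pg G U) (fun g => gmul g (theta U g) = gone)
         (fun b g => gmul (gmul (theta U b) g) (ginv b));
  prob := fun U V f g => pres G f g;
  prmor := fun U V f m => (pres G f (fst m), pres G f (snd m)) |}.

Definition hEBBG : PshGrpd C := hfixPsh EBBG barOb barMor.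

(* The canonical map: (g, phi=(b1,b2)) |-> b1 g ;
   an arrow alpha = (c1,c2) : (g,phi) -> (g1,phi1) |-> (c2, b1 g). *)
Definition canonMap (U : Ob C) : Functor (pX hEBBG U) (pX EBZ U) := {|
  fo := fun p : ob (pX hEBBG U) => gmul (fst (fst (snd p))) (fst p) : ob (pX EBZ U);
  fm := fun t : mor (pX hEBBG U) =>
     ((snd (fst (snd t)),
       gmul (fst (fst (snd (fst (fst t))))) (fst (fst (fst t)))) : mor (pX EBZ U)) |}.

End Specific.

(* Main.v *)
Require Import Defs.
Section GL.
Variable (K : Group).
Implicit Types x y z : K.
Lemma mulKg x y : gmul (ginv x) (gmul x y) = y.
Proof. rewrite gmulA, gmulVl, gmul1l; reflexivity. Qed.
Lemma mulVKg x y : gmul x (gmul (ginv x) y) = y.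
Proof. rewrite gmulA, gmulVr, gmul1l; reflexivity. Qed.
Lemma inv_uniq x y : gmul x y = gone -> ginv x = y.
Proof. intro H. rewrite <- (gmul1r _ (ginv x)), <- H, mulKg. reflexivity. Qed.
Lemma ginv1 : ginv (@gone K) = gone.
Proof. apply inv_uniq, gmul1l. Qed.
Lemma ginvK x : ginv (ginv x) = x.
Proof. apply inv_uniq, gmulVl. Qed.
Lemma ginvM x y : ginv (gmul x y) = gmul (ginv y) (ginv x).
Proof. apply inv_uniq. rewrite <- gmulA, (gmulA _ y), gmulVr, gmul1l, gmulVr. reflexivity. Qed.
End GL.
Section S.
Context (C : Cat) (G : PshGroup C)
    (theta : forall U, pg G U -> pg G U) (B : forall U, pg G U -> Prop)
    (Htheta : is_involution G theta)
    (HB : is_subgroup_presheaf G B)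
    (HthetaB : forall U y, B U y <-> exists x, B U x /\ theta U x = y).
Lemma thM U x y : theta U (gmul x y) = gmul (theta U x) (theta U y).
Proof. apply Htheta. Qed.
Lemma thK U x : theta U (theta U x) = x.
Proof. apply Htheta. Qed.
Lemma th1 U : theta U gone = gone.
Proof. assert (H := thM U gone gone). rewrite gmul1l in H.
 rewrite <- (mulKg _ (theta U gone) (theta U gone)), <- H, gmulVl. reflexivity. Qed.
Lemma thV U x : theta U (ginv x) = ginv (theta U x).
Proof. symmetry; apply inv_uniq. rewrite <- thM, gmulVr. apply th1. Qed.
Lemma B1 U : B U gone. Proof. apply HB. Qed.
Lemma BM U x y : B U x -> B U y -> B U (gmul x y). Proof. apply HB. Qed.
Lemma BV U x : B U x -> B U (ginv x). Proof. apply HB. Qed.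
Lemma Bth U x : B U x -> B U (theta U x). Proof. intro; apply HthetaB; eauto. Qed.


Ltac gnorm := repeat (rewrite ?ginvM, ?ginvK, ?ginv1, ?thM, ?thV, ?th1, ?thK, ?gmul1l, ?gmul1r,
   <- ?gmulA, ?mulKg, ?mulVKg, ?gmulVr, ?gmulVl, ?gmul1r).
Ltac gnormH H := repeat (rewrite ?ginvM, ?ginvK, ?ginv1, ?thM, ?thV, ?th1, ?thK, ?gmul1l, ?gmul1r,
   <- ?gmulA, ?mulKg, ?mulVKg, ?gmulVr, ?gmulVl, ?gmul1r in H).

Lemma objZ1 U (g b1 b2 : pg G U) :
  gmul (gmul b1 g) (ginv b2) = theta U (ginv g) -> theta U b1 = ginv b2 ->
  gmul (gmul b1 g) (theta U (gmul b1 g)) = gone.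
Proof.
  intros H1 H2. rewrite thM, H2, gmulA, H1, <- thM, gmulVl. apply th1.
Qed.



Lemma Zinv U (x : pg G U) : gmul x (theta U x) = gone -> theta U x = ginv x.
Proof. intro H; symmetry; apply inv_uniq; exact H. Qed.

Definition Hob U (h : pg G U) : pg G U * ((pg G U * pg G U) * pg G U) := (h, ((gone, gone), h)).
Definition Hmor U (a : pg G U * pg G U) :
  (pg G U * ((pg G U * pg G U) * pg G U)) * (pg G U * ((pg G U * pg G U) * pg G U))
  * ((pg G U * pg G U) * pg G U) :=
  ((Hob U (snd a), Hob U (gmul (gmul (theta U (fst a)) (snd a)) (ginv (fst a)))),
   ((theta U (fst a), fst a), snd a)).
Definition Hfun U : Functor (pX (EBZ G theta B) U) (pX (hEBBG G theta B) U) :=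
  Build_Functor (pX (EBZ G theta B) U) (pX (hEBBG G theta B) U) (Hob U) (Hmor U).

Theorem main_aux : is_acyclic_sectionwise_fibration (hEBBG G theta B) (EBZ G theta B)
    (canonMap G theta B).
Proof.
  split; [split; [|split]|].
  - intro U. unfold is_functor. cbn.
    split; [|split; [|split; [|split]]].
    + intros [g [[b1 b2] s]]; cbn; unfold barMor, barOb; cbn.
      intros (_ & _ & -> & H1 & H2). injection H2; intros. eapply objZ1; eauto.
    + intros [[[g [[b1 b2] s]] [g' [[b1' b2'] s']]] [[c1 c2] s'']]; cbn; unfold barMor, barOb; cbn.
      intros ((_ & _ & -> & H1 & H2) & (_ & _ & -> & H1' & H2') & ((Bc1 & Bc2) & _) & -> & Ht & He).
      injection H2; injection H2'; injection He; intros. split; auto. eapply objZ1; eauto.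
    + intros [[[g [[b1 b2] s]] [g' [[b1' b2'] s']]] [[c1 c2] s'']]; cbn; unfold barMor, barOb; cbn.
      intros ((_ & _ & -> & H1 & H2) & (_ & _ & -> & H1' & H2') & ((Bc1 & Bc2) & _) & -> & Ht & He).
      injection H2; injection H2'; injection He; intros. split; auto.
      rewrite <- Ht. rewrite <- !gmulA. rewrite (gmulA _ b1' c1), H0. gnorm. reflexivity.
    + intros; reflexivity.
    + intros; reflexivity.
  - intros U V f [g [[b1 b2] s]] _. cbn. symmetry; apply pres_mul.
  - intros U V f [[[g [[b1 b2] s]] [g' [[b1' b2'] s']]] [[c1 c2] s'']] _. cbn.
      f_equal. symmetry; apply pres_mul.
  - intro U. split.
    + intros [g [[b1 b2] s]] [c h]; cbn; unfold barMor, barOb; cbn.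
      intros (_ & ((Bb1 & Bb2) & _) & -> & H1 & H2) (Bc & Zh) Hs. injection H2; intros H3 H4 H5. subst h.
      exists ((g, (b1, b2, g)), (gmul g (ginv c), (gmul (theta U c) b1, gmul b2 (ginv c), gmul g (ginv c))), (gone, c, g)).
      cbn; unfold barMor, barOb; cbn.
      split; [|split; reflexivity].
      gnorm. gnormH H1. rewrite H1, H4, H5.
      repeat split; auto using B1, BM, BV, Bth.
    + exists (Hfun U). split; [|split].
      * unfold is_functor; cbn. split;[|split;[|split;[|split]]].
        -- intros x Zx. unfold barMor, barOb; cbn. pose proof (Zinv _ _ Zx) as Tx.
           gnorm; rewrite ?Tx; gnorm. repeat split; auto using B1.
        -- intros [c h] [Bc Zh]; cbn in *. unfold barMor, barOb; cbn. pose proof (Zinv _ _ Zh) as Tx.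
           gnorm; rewrite ?Tx; gnorm. repeat split; auto using B1, Bth.
        -- split; reflexivity.
        -- intros x Zx. unfold Hmor, Hob; cbn. gnorm. reflexivity.
        -- intros [c h] [d h'] [Bc Zh] [Bd Zh'] E; cbn in *. subst h'. unfold Hmor, Hob; cbn. gnorm. reflexivity.
      * exists (fun p : pg G U * ((pg G U * pg G U) * pg G U) =>
          ((p, Hob U (gmul (fst (fst (snd p))) (fst p))), ((fst (fst (snd p)), gone), fst p))
          : mor (pX (hEBBG G theta B) U)).
        split.
        -- intros [g [[b1 b2] s]]; cbn; unfold barMor, barOb; cbn.
           intros (_ & ((Bb1 & Bb2) & _) & -> & H1 & H2). injection H2; intros H3 H4 H5.
           pose proof (Zinv _ _ (objZ1 _ _ _ _ H1 H4)) as Tx.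
           rewrite (thV _ (gmul b1 g)), Tx, ginvK, H1, H4, H5.
           gnorm. repeat split; auto using B1.
        -- intros [[[g [[b1 b2] s]] [g' [[b1' b2'] s']]] [[c1 c2] s'']]; cbn; unfold barMor, barOb; cbn.
           intros ((_ & _ & -> & H1 & H2) & (_ & _ & -> & H1' & H2') & ((Bc1 & Bc2) & _) & -> & Ht & He).
           injection He; intros E2 E1. subst g'. unfold Hmor, Hob; cbn.
           rewrite <- !gmulA, (gmulA _ b1' c1), E1. gnorm. reflexivity.
      * exists (fun h : pg G U => ((gone, gmul gone h) : mor (pX (EBZ G theta B) U))).
        split.
        -- intros h Zh; cbn in *. gnorm. repeat split; auto using B1.
        -- intros [c h] [Bc Zh]; cbn in *. unfold Hmor, Hob; cbn. gnorm. reflexivity.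
Qed.
End S.

Theorem mainTheorem10 (C : Cat) (G : PshGroup C)
    (theta : forall U, pg G U -> pg G U) (B : forall U, pg G U -> Prop)
    (Htheta : is_involution G theta)
    (HB : is_subgroup_presheaf G B)
    (HthetaB : forall U y, B U y <-> exists x, B U x /\ theta U x = y) :
  is_acyclic_sectionwise_fibration (hEBBG G theta B) (EBZ G theta B)
    (canonMap G theta B).
Proof. exact (main_aux C G theta B Htheta HB HthetaB). Qed.
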